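(* Let $(E,\mathcal L)$ be a local representation over an infinite set $B$, and let $X\mapsto{}^*X$ be the nonstandard analysis induced by it (cylindrical ultrapower). Then: (i) $X\mapsto{}^*X$ is a $|B|$-confined nonstandard analysis. (ii) If $X\mapsto{}^{\circ}X$ is a $|B|$-confined nonstandard analysis whose induced local representation on $B$ is isomorphic to $(E,\mathcal L)$ (we then identify ${}^{\circ}B=E$), then the following maps are well defined, natural in $X$, and mutually inverse, so the two nonstandard analyses are naturally isomorphic: $\alpha_X:{}^*X\to{}^{\circ}X$: if $\phi:B^E\to X$ represents an element and $\phi(\psi)=f(\psi_{e_1},\dots,\psi_{e_n})$ with $e_1,\dots,e_n\in E$, $f:B^n\to X$, then $\alpha_X([\phi])={}^{\circ}f(e_1,\dots,e_n)$; $\gamma_X:{}^{\circ}X\to{}^*X$: for $x\in{}^{\circ}X$ choose $f:B\to X$ and $e\in E$ with $x={}^{\circ}f(e)$ (possible by $|B|$-confinement), and set $\gamma_X(x)=$ the class modulo $\mathcal L$ of $\psi\mapsto f(\psi_e)$; this is independent of the choice of $f,e$.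
   Context: A nonstandard analysis is a functor ${}^*:\mathbf{Set}\to\mathbf{Set}$ (images ${}^*A$, ${}^*f$) which (i) maps the full subcategory $\mathbf{Fin}$ of finite sets into itself as a self-equivalence and (ii) preserves finite products and equalizers; thus ${}^*(A_1\times\dots\times A_n)={}^*A_1\times\dots\times{}^*A_n$ and for $R\subseteq A_1\times\dots\times A_n$, ${}^*R\subseteq{}^*A_1\times\dots\times{}^*A_n$. For an infinite cardinal $\mathfrak m$, $x\in{}^*A$ is $\mathfrak m$-confined if $x\in{}^*A'$ for some $A'\subseteq A$ with $|A'|\le\mathfrak m$; the analysis is $\mathfrak m$-confined if all elements of all ${}^*A$ are. For sets $B,E$, the cylinder Boolean algebra of $B^E$ consists of the subsets of $B^E$ of the form $\{\psi\in B^E:(\psi_{e_1},\dots,\psi_{e_n})\in R\}$ with $e_1,\dots,e_n\in E$, $R\subseteq B^n$. A local representation over $B$ is a pair $(E,\mathcal L)$ with $E$ a set and $\mathcal L$ an ultrafilter on the cylinder Boolean algebra of $B^E$; for $e_1,\dots,e_n\in E$ and $R\subseteq B^n$ one says $R$ ${}^*$-holds for $(e_1,\dots,e_n)$ if $\{\psi:(\psi_{e_1},\dots,\psi_{e_n})\in R\}\in\mathcal L$. Two local representations $(E,\mathcal L)$, $(E',\mathcal L')$ over $B$ are isomorphic if there is a bijection $\theta:E\to E'$ such that for all $n$, $e_i\in E$, $R\subseteq B^n$: $R$ ${}^*$-holds for $(e_1,\dots,e_n)$ iff it ${}^*$-holds for $(\theta e_1,\dots,\theta e_n)$. A nonstandard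 analysis induces on a set $B$ the local representation $E={}^*B$ in which $R$ ${}^*$-holds for $(e_1,\dots,e_n)$ iff $(e_1,\dots,e_n)\in{}^*R$. The nonstandard analysis induced by $(E,\mathcal L)$: for a set $X$, ${}^*X$ is the set of maps $\phi:B^E\to X$ depending only on finitely many coordinates, modulo the equivalence $\phi\sim\phi'$ iff $\{\psi:\phi(\psi)=\phi'(\psi)\}\in\mathcal L$; for $g:X\to Y$, ${}^*g([\phi])=[g\circ\phi]$. *)

(* Defs.v *)
From mathcomp Require Import all_boot.
From Stdlib Require Import ClassicalEpsilon.
Set Implicit Arguments. Unset Strict Implicit. Unset Printing Implicit Defensive.

(* "Set" is modelled by Type; a subset of A is a predicate A -> Prop and the
   corresponding object is the subtype {a | P a}; B^n is 'I_n -> B. *)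

Definition finite (A : Type) : Prop := exists l : seq A, forall a, List.In a l.

Section NSA.
Variable F : Type -> Type.
Variable fmap : forall X Y : Type, (X -> Y) -> F X -> F Y.

Definition is_functor : Prop :=
  (forall X (x : F X), fmap (fun a : X => a) x = x) /\
  (forall X Y Z (f : X -> Y) (g : Y -> Z) (x : F X),
      fmap (fun a => g (f a)) x = fmap g (fmap f x)).

Definition fin_self_equivalence : Prop :=
  (forall A, finite A -> finite (F A)) /\
  (forall A B (f g : A -> B), finite A -> finite B ->
      (forall y, fmap f y = fmap g y) -> forall a, f a = g a) /\
  (forall A B (h : F A -> F B), finite A -> finite B ->
      exists f : A -> B, forall y, fmap f y = h y) /\
  (forall Y, finite Y -> exists (X : Type) (u : F X -> Y), finite X /\ bijective u).

Definition preserves_finite_products : Prop :=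
  (exists u : F unit, forall v : F unit, v = u) /\
  (forall A B : Type,
      bijective (fun z : F (A * B) => (fmap (@fst A B) z, fmap (@snd A B) z))).

Definition preserves_equalizers : Prop :=
  forall A B (f g : A -> B),
    injective (fmap (@proj1_sig A (fun a => f a = g a))) /\
    (forall y : F A, fmap f y = fmap g y ->
       exists z : F {a | f a = g a}, fmap (@proj1_sig _ _) z = y).

Definition is_NSA : Prop :=
  is_functor /\ fin_self_equivalence /\ preserves_finite_products /\
  preserves_equalizers.

(* m-confined, with m = |B| : every x in *A lies in *A' for some A' with
   |A'| <= |B| *)
Definition confined (B : Type) : Prop :=
  forall A (x : F A), exists (A' : A -> Prop) (j : {a | A' a} -> B),
    injective j /\ exists y : F {a | A' a}, fmap (@proj1_sig _ _) y = x.

(* induced local representation on B: R *-holds for (e_1..e_n) iff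
   (e_1..e_n) in *R  (as a subset of *(B^n) = ( *B)^n ) *)
Definition ind_holds (B : Type) (n : nat) (e : 'I_n -> F B)
    (R : ('I_n -> B) -> Prop) : Prop :=
  exists r : F {v : 'I_n -> B | R v},
    forall i, fmap (fun w : {v : 'I_n -> B | R v} => proj1_sig w i) r = e i.
End NSA.

Section LocalRep.
Variables B E : Type.

Definition cyl (n : nat) (e : 'I_n -> E) (R : ('I_n -> B) -> Prop) :
    (E -> B) -> Prop := fun psi => R (fun i => psi (e i)).

Definition cylinder (S : (E -> B) -> Prop) : Prop :=
  exists n (e : 'I_n -> E) (R : ('I_n -> B) -> Prop),
    forall psi, S psi <-> cyl e R psi.

Definition cyl_ultrafilter (L : ((E -> B) -> Prop) -> Prop) : Prop :=
  (forall S, L S -> cylinder S) /\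
  L (fun _ => True) /\
  ~ L (fun _ => False) /\
  (forall S T, L S -> L T -> L (fun psi => S psi /\ T psi)) /\
  (forall S T, L S -> cylinder T -> (forall psi, S psi -> T psi) -> L T) /\
  (forall S, cylinder S -> L S \/ L (fun psi => ~ S psi)).

Definition lr_iso (L : ((E -> B) -> Prop) -> Prop)
    (F : Type -> Type) (fmap : forall X Y : Type, (X -> Y) -> F X -> F Y)
    (theta : E -> F B) : Prop :=
  bijective theta /\
  forall n (e : 'I_n -> E) (R : ('I_n -> B) -> Prop),
    L (cyl e R) <-> ind_holds fmap (fun i => theta (e i)) R.

Variable L : ((E -> B) -> Prop) -> Prop.

Definition fin_dep (X : Type) (phi : (E -> B) -> X) : Prop :=
  exists n (e : 'I_n -> E) (f : ('I_n -> B) -> X),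
    forall psi, phi psi = f (fun i => psi (e i)).

Definition FD (X : Type) := {phi : (E -> B) -> X | fin_dep phi}.

Definition class_of (X : Type) (phi : FD X) : FD X -> Prop :=
  fun phi' => L (fun psi => proj1_sig phi psi = proj1_sig phi' psi).

Definition Star (X : Type) : Type :=
  {C : FD X -> Prop | exists phi : FD X, C = class_of phi}.

Lemma fin_dep_comp (X Y : Type) (g : X -> Y) (phi : (E -> B) -> X) :
  fin_dep phi -> fin_dep (fun psi => g (phi psi)).
Proof.
move=> [n [e [f H]]]; exists n, e, (fun v => g (f v)) => psi.
by rewrite H.
Qed.

Definition fd_comp (X Y : Type) (g : X -> Y) (phi : FD X) : FD Y :=
  exist _ (fun psi => g (proj1_sig phi psi))
        (fin_dep_comp g (proj2_sig phi)).

Definition star_class (X : Type) (phi : FD X) : Star X :=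
  exist _ (class_of phi) (ex_intro _ phi erefl).

Definition starmap (X Y : Type) (g : X -> Y) (C : Star X) : Star Y :=
  star_class (fd_comp g (proj1_sig (constructive_indefinite_description _
                                       (proj2_sig C)))).

Definition represents (X : Type) (C : Star X) (phi : (E -> B) -> X) : Prop :=
  exists H : fin_dep phi, proj1_sig C = class_of (exist _ phi H).
End LocalRep.

(* Main.v *)
Require Import Defs.
From mathcomp Require Import all_boot.
From mathcomp Require classical_sets.
From Stdlib Require Import ClassicalEpsilon Classical FunctionalExtensionality PropExtensionality ProofIrrelevance.
Set Implicit Arguments. Unset Strict Implicit. Unset Printing Implicit Defensive.

Lemma zorn_sets T (P : (T -> Prop) -> Prop) :
  (forall Fm : (T -> Prop) -> Prop, (forall X, Fm X -> P X) ->
     (forall X Y, Fm X -> Fm Y -> (forall t, X t -> Y t) \/ (forall t, Y t -> X t)) ->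
     P (fun t => exists2 X, Fm X & X t)) ->
  exists A, P A /\ forall Bs, (forall t, A t -> Bs t) -> ~ (forall t, Bs t -> A t) -> ~ P Bs.
Proof.
move=> H.
have [A [PA HA]] := @classical_sets.Zorn_bigcup T P (fun Fm sub tot => H Fm sub tot).
exists A; split => // Bs AB BA; apply: HA; split => //.
Qed.

Lemma nat_inj_of_infinite (B : Type) : ~ finite B -> exists f : nat -> B, injective f.
Proof.
move=> HB.
have g0 : forall l : seq B, exists b, ~ List.In b l.
  move=> l; apply: NNPP => Hn; apply: HB; exists l => a.
  by apply: NNPP => Ha; apply: Hn; exists a.
pose g l := proj1_sig (constructive_indefinite_description _ (g0 l)).
have gP : forall l, ~ List.In (g l) l := fun l => proj2_sig (constructive_indefinite_description _ (g0 l)).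
pose s := fix s n := if n is n'.+1 then g (s n') :: s n' else [::].
exists (fun n => g (s n)).
have inS : forall m n, m < n -> List.In (g (s m)) (s n).
  move=> m; elim=> // n IH; rewrite ltnS leq_eqVlt => /orP[/eqP ->|/IH H]; by [left| right].
move=> m n E; case: (ltngtP m n) => // H.
  by case: (gP (s n)); rewrite -E; apply: inS.
by case: (gP (s m)); rewrite E; apply: inS.
Qed.

Section Hess.
Variable B : Type.
Variables (f : nat -> B) (finj : injective f).
Definition pk (p : nat * nat) : nat := pickle p.
Lemma pk_inj : injective pk. Proof. exact: pcan_inj pickleK. Qed.

Definition Tp := ((B * B) * B)%type.
Definition G0 (t : Tp) : Prop :=
  exists m n, t.1.1 = f m /\ t.1.2 = f n /\ t.2 = f (pk (m, n)).
Definition dom (G : Tp -> Prop) (a : B) := exists y, G ((a, a), y).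
Definition good (G : Tp -> Prop) : Prop :=
 (forall p y y', G (p,y) -> G (p,y') -> y = y') /\
 (forall p p' y, G (p,y) -> G (p',y) -> p = p') /\
 (forall a b, dom G a -> dom G b -> exists y, G ((a,b),y)) /\
 (forall a b y, G ((a,b),y) -> dom G a /\ dom G b /\ dom G y).
Definition PP (G : Tp -> Prop) := (forall t, ~ G t) \/ (good G /\ forall t, G0 t -> G t).

Lemma G0_good : good G0.
Proof.
split; [|split; [|split]].
- move=> [x y] z z' [m [n [/= Hx [Hy Hz]]]] [m' [n' [/= Hx' [Hy' Hz']]]].
  rewrite Hx in Hx'; rewrite Hy in Hy'.
  by rewrite Hz Hz' (finj Hx') (finj Hy').
- move=> [x y] [x' y'] z [m [n [/= Hx [Hy Hz]]]] [m' [n' [/= Hx' [Hy' Hz']]]].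
  rewrite Hz in Hz'; case: (pk_inj (finj Hz')) => E1 E2; subst m' n'.
  by rewrite /= Hx Hy Hx' Hy'.
- move=> a b [y [m [n [/= Ha _]]]] [y' [m' [n' [/= Hb _]]]].
  by exists (f (pk (m, m'))), m, m'.
- move=> a b y [m [n [/= Ha [Hb Hy]]]]; split; [|split].
  + by exists (f (pk (m, m))), m, m.
  + by exists (f (pk (n, n))), n, n.
  + by exists (f (pk (pk (m, n), pk (m, n)))), (pk (m, n)), (pk (m, n)).
Qed.

Lemma PP_chain (Fm : (Tp -> Prop) -> Prop) : (forall X, Fm X -> PP X) ->
     (forall X Y, Fm X -> Fm Y -> (forall t, X t -> Y t) \/ (forall t, Y t -> X t)) ->
     PP (fun t => exists2 X, Fm X & X t).
Proof.
move=> HP Htot.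
have ne_good : forall X t, Fm X -> X t -> good X /\ forall t, G0 t -> X t.
  move=> X t FX Xt; case: (HP X FX) => // H; by case: (H t).
case: (classic (exists t X, Fm X /\ X t)) => [[t0 [X0 [FX0 X0t]]]|Hn]; last first.
  by left => t [X FX Xt]; apply: Hn; exists t, X.
right; split; last by move=> t Gt; exists X0 => //; apply: (proj2 (ne_good _ _ FX0 X0t)).
have both : forall X Y t s, Fm X -> Fm Y -> X t -> Y s ->
   exists Z, [/\ Fm Z, good Z, Z t & Z s].
  move=> X Y t s FX FY Xt Ys; case: (Htot X Y FX FY) => H.
  - by exists Y; split => //; [apply: (proj1 (ne_good _ _ FY Ys)) | apply: H].
  - by exists X; split => //; [apply: (proj1 (ne_good _ _ FX Xt)) | apply: H].
split; [|split; [|split]].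
- move=> p y y' [X FX Xt] [Y FY Ys].
  have [Z [_ [Z1 _] Zt Zs]] := both _ _ _ _ FX FY Xt Ys; exact: Z1 Zt Zs.
- move=> p p' y [X FX Xt] [Y FY Ys].
  have [Z [_ [_ [Z2 _]] Zt Zs]] := both _ _ _ _ FX FY Xt Ys; exact: Z2 Zt Zs.
- move=> a b [ya [X FX Xt]] [yb [Y FY Ys]].
  have [Z [FZ [_ [_ [Z3 _]]] Zt Zs]] := both _ _ _ _ FX FY Xt Ys.
  have [y Zy] := Z3 a b (ex_intro _ _ Zt) (ex_intro _ _ Zs).
  by exists y, Z.
- move=> a b y [X FX Xt].
  have [[_ [_ [_ X4]]] _] := ne_good _ _ FX Xt.
  have [[y1 H1] [[y2 H2] [y3 H3]]] := X4 _ _ _ Xt.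
  split; [exists y1|split; [exists y2|exists y3]]; by exists X.
Qed.
End Hess.

Lemma rel_inj (X Y : Type) (R : X -> Y -> Prop) : (forall x, exists y, R x y) ->
  (forall x x' y, R x y -> R x' y -> x = x') -> exists g : X -> Y, injective g.
Proof.
move=> Ht Hi.
exists (fun x => proj1_sig (constructive_indefinite_description _ (Ht x))).
move=> x x' E.
apply: (Hi x x' (proj1_sig (constructive_indefinite_description _ (Ht x)))).
  exact: proj2_sig.
rewrite E; exact: proj2_sig.
Qed.

Lemma compar (B : Type) (A : B -> Prop) : exists H : (B * B) -> Prop,
  [/\ (forall a c c', H (a, c) -> H (a, c') -> c = c'),
      (forall a a' c, H (a, c) -> H (a', c) -> a = a'),
      (forall a c, H (a, c) -> A a /\ ~ A c) &
      ((forall a, A a -> exists c, H (a, c)) \/ (forall c, ~ A c -> exists a, H (a, c)))].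
Proof.
pose QQ (H : B * B -> Prop) :=
  [/\ (forall a c c', H (a, c) -> H (a, c') -> c = c'),
      (forall a a' c, H (a, c) -> H (a', c) -> a = a') &
      (forall a c, H (a, c) -> A a /\ ~ A c)].
have [H [[H1 H2 H3] Hmax]] : exists H, QQ H /\ forall Bs, (forall t, H t -> Bs t) ->
   ~ (forall t, Bs t -> H t) -> ~ QQ Bs.
  apply: zorn_sets => Fm HF Htot.
  have both : forall X Y t s, Fm X -> Fm Y -> X t -> Y s ->
     exists Z, [/\ Fm Z, Z t & Z s].
    move=> X Y t s FX FY Xt Ys; case: (Htot X Y FX FY) => HH.
    - by exists Y; split => //; apply: HH.
    - by exists X; split => //; apply: HH.
  split.
  - move=> a c c' [X FX Xt] [Y FY Ys].
    have [Z [FZ Zt Zs]] := both _ _ _ _ FX FY Xt Ys.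
    by case: (HF Z FZ) => Z1 _ _; apply: Z1 Zt Zs.
  - move=> a a' c [X FX Xt] [Y FY Ys].
    have [Z [FZ Zt Zs]] := both _ _ _ _ FX FY Xt Ys.
    by case: (HF Z FZ) => _ Z2 _; apply: Z2 Zt Zs.
  - by move=> a c [X FX Xt]; case: (HF X FX) => _ _ X3; apply: X3.
exists H; split => //.
apply: NNPP => Hn.
have [a0 [Aa0 Ha0]] : exists a0, A a0 /\ forall c, ~ H (a0, c).
  apply: NNPP => K; apply: Hn; left => a Aa; apply: NNPP => K2; apply: K.
  exists a; split => // c Hc; apply: K2; by exists c.
have [c0 [Ac0 Hc0]] : exists c0, ~ A c0 /\ forall a, ~ H (a, c0).
  apply: NNPP => K; apply: Hn; right => c Ac; apply: NNPP => K2; apply: K.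
  exists c; split => // a Hc; apply: K2; by exists a.
apply: (Hmax (fun t => H t \/ t = (a0, c0))).
- by move=> t Ht; left.
- by move=> /(_ (a0, c0) (or_intror erefl)) /Ha0.
split.
- move=> a c c' [Hx|[E1 E2]] [Hy|[E3 E4]]; subst => //.
  + exact: H1 Hx Hy.
  + by case: (Ha0 _ Hx).
  + by case: (Ha0 _ Hy).
- move=> a a' c [Hx|[E1 E2]] [Hy|[E3 E4]]; subst => //.
  + exact: H2 Hx Hy.
  + by case: (Hc0 _ Hx).
  + by case: (Hc0 _ Hy).
- by move=> a c [Hx|[-> ->]]; [apply: H3|].
Qed.

Theorem hess (B : Type) : ~ finite B -> exists g : B * B -> B, injective g.
Proof.
move=> HB; have [f finj] := nat_inj_of_infinite HB.
have [G [PG Gmax]] := zorn_sets (@PP_chain B f).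
have G0t : G0 f ((f 0, f 0), f (pk (0, 0))) by exists 0, 0.
case: PG => [Gemp|[[G1 [G2 [G3 G4]]] G0G]].
  exfalso; apply: (Gmax (G0 f)).
  - by move=> t /Gemp.
  - by move=> /(_ _ G0t) /Gemp.
  - by right; split => //; exact: G0_good.
pose A := dom G.
have Af : forall k, A (f k) by move=> k; exists (f (pk (k, k))); apply: G0G; exists k, k.
have f01 : f 0 <> f 1 by move/finj.
have f02 : f 0 <> f 2 by move/finj.
have f12 : f 1 <> f 2 by move/finj.
have GA : forall a b y, G ((a, b), y) -> [/\ A a, A b & A y].
  by move=> a b y /G4 [? [? ?]].
have [H [H1 H2 H3 [Hd|Hr]]] := compar A; last first.
  (* range full: B injects into A *)
  pose I b y := (A b /\ G ((f 0, b), y)) \/ (~ A b /\ exists a, H (a, b) /\ G ((f 1, a), y)).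
  have It : forall b, exists y, I b y.
    move=> b; case: (classic (A b)) => Ab.
    - have [y Gy] := G3 _ _ (Af 0) Ab; exists y; by left.
    - have [a Ha] := Hr b Ab; have [Aa _] := H3 _ _ Ha.
      have [y Gy] := G3 _ _ (Af 1) Aa; exists y; right; split => //; by exists a.
  have Ii : forall b b' y, I b y -> I b' y -> b = b'.
    move=> b b' y [[_ Gb]|[_ [a [Ha Gb]]]] [[_ Gb']|[_ [a' [Ha' Gb']]]].
    - by case: (G2 _ _ _ Gb Gb').
    - by case: (G2 _ _ _ Gb Gb') => /f01.
    - by case: (G2 _ _ _ Gb Gb') => /esym /f01.
    - case: (G2 _ _ _ Gb Gb') => E; subst a'; exact: H1 Ha Ha'.
  have IA : forall b y, I b y -> A y.
    by move=> b y [[_ Gb]|[_ [a [_ Gb]]]]; case: (GA _ _ _ Gb).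
  apply: (@rel_inj _ _ (fun p z => exists u v, [/\ I p.1 u, I p.2 v & G ((u, v), z)])).
  - move=> [x y]; have [u Iu] := It x; have [v Iv] := It y.
    have [z Gz] := G3 _ _ (IA _ _ Iu) (IA _ _ Iv).
    by exists z, u, v.
  - move=> [x y] [x' y'] z [u [v [Iu Iv Gz]]] [u' [v' [Iu' Iv' Gz']]].
    case: (G2 _ _ _ Gz Gz') => E1 E2; subst u' v'.
    by rewrite /= in Iu Iv Iu' Iv'; rewrite (Ii _ _ _ Iu Iu') (Ii _ _ _ Iv Iv').
(* domain full: contradiction with maximality *)
exfalso.
pose D c := exists a, H (a, c).
have DA : forall c, D c -> ~ A c by move=> c [a /H3 []].
pose P x a := (A x /\ a = x) \/ (D x /\ H (a, x)).
pose T x y t := (A x /\ t = f 0) \/ (~ A x /\ A y /\ t = f 1) \/ (~ A x /\ ~ A y /\ t = f 2).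
pose N (q : Tp B) := ~ (A q.1.1 /\ A q.1.2) /\ exists a b t w u,
   P q.1.1 a /\ P q.1.2 b /\ T q.1.1 q.1.2 t /\ G ((a, b), w) /\ G ((t, w), u) /\ H (u, q.2).
have PA : forall x a, P x a -> A a.
  by move=> x a [[? ->]|[_ /H3 []]].
have Pf : forall x a a', P x a -> P x a' -> a = a'.
  move=> x a a' [[Ax ->]|[Dx Hx]] [[Ax' ->]|[Dx' Hx']] //.
  - by case: (DA _ Dx' Ax).
  - by case: (DA _ Dx Ax').
  - exact: H2 Hx Hx'.
have Pex : forall x, A x \/ D x -> exists a, P x a.
  move=> x [Ax|[a Ha]]; first by exists x; left.
  by exists a; right; split => //; exists a.
have Pi : forall x x' a, P x a -> P x' a -> (A x <-> A x') -> x = x'.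
  move=> x x' a [[Ax ->]|[Dx Hx]] [[Ax' E]|[Dx' Hx']] AE //.
  - by case: (DA _ Dx' (proj1 AE Ax)).
  - by case: (DA _ Dx (proj2 AE Ax')).
  - exact: H1 Hx Hx'.
have TA : forall x y t, T x y t -> A t.
  by move=> x y t [[_ ->]|[[_ [_ ->]]|[_ [_ ->]]]].
have Tex : forall x y, exists t, T x y t.
  move=> x y; case: (classic (A x)) => Ax; first by exists (f 0); left.
  case: (classic (A y)) => Ay; first by exists (f 1); right; left.
  by exists (f 2); right; right.
have Tf : forall x y t t', T x y t -> T x y t' -> t = t'.
  move=> x y t t' [[Ax ->]|[[Ax [Ay ->]]|[Ax [Ay ->]]]]
                  [[Ax' ->]|[[Ax' [Ay' ->]]|[Ax' [Ay' ->]]]] //; tauto.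
have Ttag : forall x y x' y' t, ~ (A x /\ A y) -> ~ (A x' /\ A y') ->
    T x y t -> T x' y' t -> (A x <-> A x') /\ (A y <-> A y').
  move=> x y x' y' t N1 N2 [[Ax ->]|[[Ax [Ay ->]]|[Ax [Ay ->]]]]
                  [[Ax' E]|[[Ax' [Ay' E]]|[Ax' [Ay' E]]]];
  try (by move: E => /esym /f01); try (by move: E => /f01);
  try (by move: E => /esym /f02); try (by move: E => /f02);
  try (by move: E => /esym /f12); try (by move: E => /f12); tauto.
have mkN : forall x y, A x \/ D x -> A y \/ D y -> ~ (A x /\ A y) ->
    exists z, N ((x, y), z).
  move=> x y Hx Hy Nxy.
  have [a Pa] := Pex _ Hx; have [b Pb] := Pex _ Hy; have [t Tt] := Tex x y.
  have [w Gw] := G3 _ _ (PA _ _ Pa) (PA _ _ Pb).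
  have [_ _ Aw] := GA _ _ _ Gw.
  have [u Gu] := G3 _ _ (TA _ _ _ Tt) Aw.
  have [_ _ Au] := GA _ _ _ Gu.
  have [z Hz] := Hd u Au.
  by exists z; split => //; exists a, b, t, w, u.
pose G' q := G q \/ N q.
have domG' : forall x, dom G' x <-> A x \/ D x.
  move=> x; split.
  - move=> [y [Gy|[_ [a [_ [_ [_ [_ [Pa _]]]]]]]]]; first by left; exists y.
    by case: Pa => [[? _]|[? _]]; [left|right].
  - move=> Hx; case: (classic (A x)) => Ax.
    + by have [y Gy] := G3 _ _ Ax Ax; exists y; left.
    + have [z Nz] := mkN x x Hx Hx (fun H => Ax (proj1 H)); by exists z; right.
apply: (Gmax G').
- by move=> q Gq; left.
- have [c Hc] := Hd _ (Af 0).
  have [y [Gy|Ny]] := proj2 (domG' c) (or_intror (ex_intro _ _ Hc)) .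
  + move=> _; have [Ac _ _] := GA _ _ _ Gy; exact: DA (ex_intro _ _ Hc) Ac.
  + move=> /(_ _ (or_intror Ny)) Gy.
    have [Ac _ _] := GA _ _ _ Gy; exact: DA (ex_intro _ _ Hc) Ac.
right; split; last by move=> q /G0G; left.
have NnA : forall x y z, N ((x, y), z) -> ~ (A x /\ A y) by move=> x y z [].
split; [|split; [|split]].
- move=> [x y] z z' [Gz|Nz] [Gz'|Nz'].
  + exact: G1 Gz Gz'.
  + by have [Ax Ay _] := GA _ _ _ Gz; case: (NnA _ _ _ Nz').
  + by have [Ax Ay _] := GA _ _ _ Gz'; case: (NnA _ _ _ Nz).
  + move: Nz Nz' => [_ [a [b [t [w [u [Pa [Pb [Tt [Gw [Gu Hu]]]]]]]]]]]
                    [_ [a' [b' [t' [w' [u' [Pa' [Pb' [Tt' [Gw' [Gu' Hu']]]]]]]]]]] /=.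
    rewrite /= in Pa Pb Tt Pa' Pb' Tt' Hu Hu'.
    rewrite (Pf _ _ _ Pa Pa') (Pf _ _ _ Pb Pb') in Gw.
    rewrite (G1 _ _ _ Gw Gw') (Tf _ _ _ _ Tt Tt') in Gu.
    rewrite (G1 _ _ _ Gu Gu') in Hu.
    exact: H1 Hu Hu'.
- move=> [x y] [x' y'] z [Gz|Nz] [Gz'|Nz'].
  + exact: G2 Gz Gz'.
  + have [_ _ Az] := GA _ _ _ Gz.
    by move: Nz' => [_ [_ [_ [_ [_ [u [_ [_ [_ [_ [_ /H3 [_ ?]]]]]]]]]]]].
  + have [_ _ Az] := GA _ _ _ Gz'.
    by move: Nz => [_ [_ [_ [_ [_ [u [_ [_ [_ [_ [_ /H3 [_ ?]]]]]]]]]]]].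
  + move: Nz Nz' => [N1 [a [b [t [w [u [Pa [Pb [Tt [Gw [Gu Hu]]]]]]]]]]]
                    [N2 [a' [b' [t' [w' [u' [Pa' [Pb' [Tt' [Gw' [Gu' Hu']]]]]]]]]]].
    rewrite /= in N1 N2 Pa Pb Tt Pa' Pb' Tt' Hu Hu'.
    have Eu := H2 _ _ _ Hu Hu'; subst u'.
    case: (G2 _ _ _ Gu Gu') => Et Ew; subst t' w'.
    case: (G2 _ _ _ Gw Gw') => Ea Eb; subst a' b'.
    have [Ex Ey] := Ttag _ _ _ _ _ N1 N2 Tt Tt'.
    by rewrite (Pi _ _ _ Pa Pa' Ex) (Pi _ _ _ Pb Pb' Ey).
- move=> x y /domG' Hx /domG' Hy.
  case: (classic (A x /\ A y)) => [[Ax Ay]|Nxy].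
  + by have [z Gz] := G3 _ _ Ax Ay; exists z; left.
  + by have [z Nz] := mkN _ _ Hx Hy Nxy; exists z; right.
- move=> x y z [Gz|Nz].
  + by have [Ax Ay Az] := GA _ _ _ Gz; rewrite !domG'; split; [left|split; left].
  + move: Nz => [_ [a [b [t [w [u [Pa [Pb [Tt [Gw [Gu Hu]]]]]]]]]]].
    rewrite /= in Pa Pb Hu; rewrite !domG'; split; [|split].
    * by case: Pa => [[? _]|[? _]]; [left|right].
    * by case: Pb => [[? _]|[? _]]; [left|right].
    * by right; exists u.
Qed.

Lemma pow_inj (B : Type) : ~ finite B -> forall n, exists g : ('I_n -> B) -> B, injective g.
Proof.
move=> HB; have [f _] := nat_inj_of_infinite HB.
have [h hinj] := hess HB.
elim=> [|n [g ginj]].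
  exists (fun _ => f 0) => v v' _; by apply: functional_extensionality => -[].
exists (fun v => h (v ord0, g (fun i => v (lift ord0 i)))) => v v' /hinj [E0 /ginj E].
apply: functional_extensionality => i; case: (unliftP ord0 i) => [j ->|->] //.
exact: (f_equal (fun w => w j) E).
Qed.

Definition concat (E : Type) n m (e1 : 'I_n -> E) (e2 : 'I_m -> E) : 'I_(n + m) -> E :=
  fun i => match split i with inl j => e1 j | inr k => e2 k end.
Lemma concat_l E n m (e1 : 'I_n -> E) (e2 : 'I_m -> E) i : concat e1 e2 (lshift m i) = e1 i.
Proof. by rewrite /concat (unsplitK (inl i : 'I_n + 'I_m)). Qed.
Lemma concat_r E n m (e1 : 'I_n -> E) (e2 : 'I_m -> E) i : concat e1 e2 (rshift n i) = e2 i.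
Proof. by rewrite /concat (unsplitK (inr i : 'I_n + 'I_m)). Qed.

Lemma sig_eq (A : Type) (P : A -> Prop) (x y : {a | P a}) : proj1_sig x = proj1_sig y -> x = y.
Proof. case: x y => [a p] [b q] /= E; subst b; by rewrite (proof_irrelevance _ p q). Qed.

Section Basic.
Variables B E : Type.
Variable L : ((E -> B) -> Prop) -> Prop.
Hypothesis HL : cyl_ultrafilter L.

Lemma fin_dep_pair X Y (a : (E -> B) -> X) (b : (E -> B) -> Y) :
  fin_dep a -> fin_dep b -> fin_dep (fun psi => (a psi, b psi)).
Proof.
move=> [n [e [f Hf]]] [m [e' [g Hg]]].
exists (n + m), (concat e e'),
  (fun v => (f (fun i => v (lshift m i)), g (fun j => v (rshift n j)))) => psi.
rewrite Hf Hg; congr (f _, g _); apply: functional_extensionality => i;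
  by rewrite ?concat_l ?concat_r.
Qed.

Lemma fin_dep_const X (x : X) : fin_dep (fun _ : E -> B => x).
Proof. by exists 0, (fun i : 'I_0 => match i with Ordinal _ p => False_rect _ (notF p) end), (fun _ => x). Qed.

Lemma cyl_fd X (a : (E -> B) -> X) (P : X -> Prop) : fin_dep a -> cylinder (fun psi => P (a psi)).
Proof. move=> [n [e [f Hf]]]; exists n, e, (fun v => P (f v)) => psi; by rewrite /cyl Hf. Qed.

Lemma cyl2 X Y (a : (E -> B) -> X) (b : (E -> B) -> Y) (R : X -> Y -> Prop) :
  fin_dep a -> fin_dep b -> cylinder (fun psi => R (a psi) (b psi)).
Proof.
move=> Ha Hb; exact: (cyl_fd (fun p : X * Y => R p.1 p.2) (fin_dep_pair Ha Hb)).
Qed.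

Lemma L_up (S T : (E -> B) -> Prop) : L S -> (forall psi, S psi -> T psi) -> cylinder T -> L T.
Proof. case: HL => _ [_ [_ [_ [H _]]]] LS ST CT; exact: H LS CT ST. Qed.

Lemma L_and (S T : (E -> B) -> Prop) : L S -> L T -> L (fun psi => S psi /\ T psi).
Proof. case: HL => _ [_ [_ [H _]]]; exact: H. Qed.

Lemma L_all (S : (E -> B) -> Prop) : cylinder S -> (forall psi, S psi) -> L S.
Proof. case: HL => _ [HT _] CS HS; apply: L_up HT _ CS => psi _; exact: HS. Qed.

Lemma L_nF (S : (E -> B) -> Prop) : L S -> exists psi, S psi.
Proof.
move=> LS; apply: NNPP => Hn; case: HL => _ [_ [HF _]]; apply: HF.
apply: L_up LS _ _ => [psi Spsi|]; first by apply: Hn; exists psi.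
exact: (cyl_fd (fun _ : unit => False) (fin_dep_const tt)).
Qed.

Lemma L_ult (S : (E -> B) -> Prop) : cylinder S -> L S \/ L (fun psi => ~ S psi).
Proof. case: HL => _ [_ [_ [_ [_ H]]]]; exact: H. Qed.

Definition rep X (C : Star L X) : FD B E X :=
  proj1_sig (constructive_indefinite_description _ (proj2_sig C)).
Lemma rep_spec X (C : Star L X) : proj1_sig C = class_of L (rep C).
Proof. exact: (proj2_sig (constructive_indefinite_description _ (proj2_sig C))). Qed.

Lemma star_rep X (C : Star L X) : star_class L (rep C) = C.
Proof. by apply: sig_eq; rewrite /= -rep_spec. Qed.

Lemma class_eq X (a b : FD B E X) : L (fun psi => proj1_sig a psi = proj1_sig b psi) ->
  class_of L a = class_of L b.
Proof.
move=> Lab; apply: functional_extensionality => c; apply: propositional_extensionality.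
rewrite /class_of; split => H.
- apply: L_up (L_and Lab H) _ _; first by move=> psi [-> ->].
  exact: cyl2 (proj2_sig b) (proj2_sig c).
- apply: L_up (L_and Lab H) _ _; first by move=> psi [-> ->].
  exact: cyl2 (proj2_sig a) (proj2_sig c).
Qed.

Lemma L_refl X (a : FD B E X) : L (fun psi => proj1_sig a psi = proj1_sig a psi).
Proof. apply: L_all => //; exact: cyl2 (proj2_sig a) (proj2_sig a). Qed.

Lemma class_eq_inv X (a b : FD B E X) : class_of L a = class_of L b ->
  L (fun psi => proj1_sig a psi = proj1_sig b psi).
Proof. move=> Eab; have H := L_refl b; change (class_of L b b) in H; rewrite -Eab in H; exact: H. Qed.

Lemma star_eq X (a b : FD B E X) : L (fun psi => proj1_sig a psi = proj1_sig b psi) ->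
  star_class L a = star_class L b.
Proof. by move=> H; apply: sig_eq; apply: class_eq. Qed.

Lemma star_eq_inv X (a b : FD B E X) : star_class L a = star_class L b ->
  L (fun psi => proj1_sig a psi = proj1_sig b psi).
Proof. move=> Eab; apply: class_eq_inv; exact: (f_equal (@proj1_sig _ _) Eab). Qed.

Lemma star_eq_pt X (a b : FD B E X) : (forall psi, proj1_sig a psi = proj1_sig b psi) ->
  star_class L a = star_class L b.
Proof. move=> H; apply: star_eq; apply: L_all => //; exact: cyl2 (proj2_sig a) (proj2_sig b). Qed.

Lemma starmap_class X Y (g : X -> Y) (a : FD B E X) :
  starmap g (star_class L a) = star_class L (fd_comp g a).
Proof.
rewrite /starmap; apply: star_eq => /=.
case: (constructive_indefinite_description _ _) => r /= /class_eq_inv Lar.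
apply: L_up Lar _ _; first by move=> psi ->.
exact: cyl2 (proj2_sig (fd_comp g r)) (proj2_sig (fd_comp g a)).
Qed.

Lemma star_ind X (C : Star L X) : exists a : FD B E X, C = star_class L a.
Proof. by exists (rep C); rewrite star_rep. Qed.

Definition cfd X (x : X) : FD B E X := exist _ (fun _ => x) (fin_dep_const x).
End Basic.

Section Part1.
Variables B E : Type.
Variable L : ((E -> B) -> Prop) -> Prop.
Hypothesis HL : cyl_ultrafilter L.

Lemma ultra_fin A (a : FD B E A) (l : seq A) :
  L (fun psi => List.In (proj1_sig a psi) l) ->
  exists x, L (fun psi => proj1_sig a psi = x).
Proof.
elim: l => [|x l IH] /= H.
  by have [psi []] := L_nF HL H.
case: (L_ult HL (cyl_fd (fun y => y = x) (proj2_sig a))) => Hx; first by exists x.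
apply: IH; refine (L_up HL (L_and HL H Hx) _ _).
  by move=> psi [[<-|//] ?].
exact: cyl_fd (fun y => List.In y l) (proj2_sig a).
Qed.

Lemma star_const A : finite A -> forall C : Star L A, exists x, C = star_class L (cfd B E x).
Proof.
move=> [l Hl] C; have [a ->] := star_ind C.
have [x Hx] := @ultra_fin A a l (L_all HL (cyl_fd (fun y => List.In y l) (proj2_sig a)) (fun psi => Hl _)).
by exists x; apply: (star_eq HL).
Qed.

Lemma starmap_const X Y (g : X -> Y) (x : X) :
  starmap g (star_class L (cfd B E x)) = star_class L (cfd B E (g x)).
Proof. by rewrite (starmap_class HL) //; apply: (star_eq_pt HL). Qed.

Lemma const_inj X (x y : X) : star_class L (cfd B E x) = star_class L (cfd B E y) -> x = y.
Proof. by move=> /(star_eq_inv HL) /(L_nF HL) [psi]. Qed.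

Lemma rep_class X (d : FD B E X) : L (fun psi => proj1_sig (rep (star_class L d)) psi = proj1_sig d psi).
Proof. apply: (star_eq_inv HL); exact: star_rep. Qed.

Lemma part1_NSA : is_NSA (@starmap B E L).
Proof.
split; [|split; [|split]].
- split.
  + move=> X C; have [a ->] := star_ind C; rewrite (starmap_class HL) //; exact: (star_eq_pt HL).
  + move=> X Y Z f g C; have [a ->] := star_ind C; rewrite !(starmap_class HL) //; exact: (star_eq_pt HL).
- split; [|split; [|split]].
  + move=> A [l Hl]; exists (List.map (fun x => star_class L (cfd B E x)) l) => C.
    have [x ->] := star_const (ex_intro _ l Hl) C; apply: List.in_map; exact: Hl.
  + move=> A Y f g _ _ H a; apply: (@const_inj Y).
    by rewrite -!starmap_const H.
  + move=> A Y h HA HY.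
    have Hc : forall a, exists y, h (star_class L (cfd B E a)) = star_class L (cfd B E y).
      move=> a; exact: star_const.
    exists (fun a => proj1_sig (constructive_indefinite_description _ (Hc a))) => C.
    have [x ->] := star_const HA C; rewrite starmap_const.
    by rewrite -(proj2_sig (constructive_indefinite_description _ (Hc x))).
  + move=> Y HY; exists Y.
    exists (fun C => proj1_sig (constructive_indefinite_description _ (star_const HY C))).
    split => //; exists (fun y => star_class L (cfd B E y)).
    * move=> C; exact: (esym (proj2_sig (constructive_indefinite_description _ (star_const HY C)))).
    * move=> y; apply: const_inj; symmetry.
      exact: (proj2_sig (constructive_indefinite_description _ (star_const HY _))).
- split.
  + exists (star_class L (cfd B E tt)) => C; have [a ->] := star_ind C.
    by apply: (star_eq_pt HL) => psi; case: (proj1_sig a psi).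
  + move=> X Y.
    exists (fun p : Star L X * Star L Y => star_class L
        (exist _ (fun psi => (proj1_sig (rep p.1) psi, proj1_sig (rep p.2) psi))
           (fin_dep_pair (proj2_sig (rep p.1)) (proj2_sig (rep p.2))))).
    * move=> C; have [c ->] := star_ind C; rewrite !(starmap_class HL) //=.
      apply: (star_eq HL) => //=.
      refine (L_up HL (L_and HL (rep_class (fd_comp fst c)) (rep_class (fd_comp snd c))) _ _).
        by move=> psi [-> ->] /=; case: (proj1_sig c psi).
      apply: cyl2 (proj2_sig c) => //.
      exact: fin_dep_pair (proj2_sig (rep _)) (proj2_sig (rep _)).
    * move=> [a b] /=; rewrite !(starmap_class HL) //=.
      by congr (_, _); rewrite -[RHS]star_rep //; apply: (star_eq_pt HL).
- move=> A Y f g; split.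
  + move=> y1 y2; have [c1 ->] := star_ind y1; have [c2 ->] := star_ind y2.
    rewrite !(starmap_class HL) // => /(star_eq_inv HL) H; apply: (star_eq HL) => //.
    refine (L_up HL H _ _); first by move=> psi /sig_eq.
    exact: cyl2 (proj2_sig c1) (proj2_sig c2).
  + move=> y; have [c ->] := star_ind y; rewrite !(starmap_class HL) // => /(star_eq_inv HL) H.
    have [psi0 H0] := L_nF HL H.
    pose w0 : {a | f a = g a} := exist _ _ H0.
    have [n [e [f0 Hf0]]] := proj2_sig c.
    pose h (v : 'I_n -> B) : {a | f a = g a} :=
      match excluded_middle_informative (f (f0 v) = g (f0 v)) with
      | left p => exist _ (f0 v) p | right _ => w0 end.
    have hP : forall v, f (f0 v) = g (f0 v) -> proj1_sig (h v) = f0 v.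
      by move=> v Hv; rewrite /h; case: excluded_middle_informative.
    have fdh : fin_dep (fun psi => h (fun i => psi (e i))) by exists n, e, h.
    exists (star_class L (exist _ _ fdh)); rewrite (starmap_class HL) //; apply: (star_eq HL) => //=.
    refine (L_up HL H _ _).
      by move=> psi /=; rewrite Hf0 => /hP.
    exact: cyl2 (fin_dep_comp _ fdh) (proj2_sig c).
Qed.

Lemma part1_conf : ~ finite B -> confined (@starmap B E L) B.
Proof.
move=> HB A x; have [c ->] := star_ind x.
have [n [e [f Hf]]] := proj2_sig c.
have [g ginj] := pow_inj HB n.
pose A' (a : A) := exists v, f v = a.
pose j (w : {a | A' a}) := g (proj1_sig (constructive_indefinite_description _ (proj2_sig w))).
exists A', j; split.
  move=> w w' /ginj E1; apply: sig_eq.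
  rewrite -(proj2_sig (constructive_indefinite_description _ (proj2_sig w))).
  by rewrite -(proj2_sig (constructive_indefinite_description _ (proj2_sig w'))) E1.
have fd : fin_dep (fun psi => (exist A' (f (fun i => psi (e i))) (ex_intro _ _ erefl))).
  by exists n, e, (fun v => exist A' (f v) (ex_intro _ _ erefl)).
exists (star_class L (exist _ _ fd)); rewrite (starmap_class HL) //.
by apply: (star_eq_pt HL) => psi /=; rewrite Hf.
Qed.
End Part1.

Section Prod.
Variable F : Type -> Type.
Variable fmap : forall X Y : Type, (X -> Y) -> F X -> F Y.
Hypothesis HN : is_NSA fmap.

Lemma fid X (x : F X) : fmap (fun a => a) x = x.
Proof. by case: HN => [[H _] _]. Qed.
Lemma fcomp X Y Z (f : X -> Y) (g : Y -> Z) (h : X -> Z) (x : F X) :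
  (forall a, h a = g (f a)) -> fmap h x = fmap g (fmap f x).
Proof.
move=> Hh; have -> : h = (fun a => g (f a)) by apply: functional_extensionality.
by case: HN => [[_ H] _]; apply: H.
Qed.
Lemma fext X Y (f g : X -> Y) (x : F X) : (forall a, f a = g a) -> fmap f x = fmap g x.
Proof. by move=> H; have -> : f = g by apply: functional_extensionality. Qed.

Lemma funit : exists u : F unit, forall v, v = u.
Proof. by case: HN => [_ [_ [[H _] _]]]. Qed.
Lemma fpair X Y : bijective (fun z : F (X * Y) => (fmap (@fst X Y) z, fmap (@snd X Y) z)).
Proof. by case: HN => [_ [_ [[_ H] _]]]. Qed.
Lemma feq_inj A Y (f g : A -> Y) : injective (fmap (@proj1_sig A (fun a => f a = g a))).
Proof. by case: HN => [_ [_ [_ H]]]; case: (H A Y f g) => H1 H2; auto. Qed.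
Lemma feq_ex A Y (f g : A -> Y) (y : F A) : fmap f y = fmap g y ->
  exists z : F {a | f a = g a}, fmap (@proj1_sig _ _) z = y.
Proof. by case: HN => [_ [_ [_ H]]]; case: (H A Y f g) => H1 H2; auto. Qed.

Lemma F_empty T : (T -> False) -> F T -> False.
Proof.
move=> HT w; have [u Hu] := funit.
case: HN => [_ [[_ [Hfaith _]] _]].
have fu : finite unit by exists [:: tt]; case; left.
have fb : finite bool by exists [:: true; false]; case; [left|right; left].
suff: true = false by []. apply: (Hfaith unit bool (fun _ => true) (fun _ => false) fu fb _ tt) => y.
rewrite (Hu y) -(Hu (fmap (fun _ : T => tt) w)).
rewrite -(fcomp (h := fun _ => true)) // -(fcomp (h := fun _ => false)) //.
by apply: fext => a; case: (HT a).
Qed.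

Definition ev Y n (i : 'I_n) (v : 'I_n -> Y) := v i.

Lemma ev_uniq Y n (z z' : F ('I_n -> Y)) :
  (forall i, fmap (ev i) z = fmap (ev i) z') -> z = z'.
Proof.
elim: n z z' => [|n IH] z z' H.
  have [u Hu] := funit.
  pose k (_ : unit) : 'I_0 -> Y := fun i => match i with Ordinal _ p => False_rect Y (notF p) end.
  have kK : forall w : F ('I_0 -> Y), w = fmap k (fmap (fun _ => tt) w).
    move=> w; rewrite -(fcomp (h := fun a => a)) ?fid // => v.
    by apply: functional_extensionality => -[].
  by rewrite (kK z) (kK z') (Hu (fmap _ z)) (Hu (fmap _ z')).
pose tov (v : 'I_n.+1 -> Y) := (v ord0, fun j => v (lift ord0 j)).
pose fromv (p : Y * ('I_n -> Y)) : 'I_n.+1 -> Y :=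
  fun i => match unlift ord0 i with Some j => p.2 j | None => p.1 end.
have fK : forall v, fromv (tov v) = v.
  move=> v; apply: functional_extensionality => i; rewrite /fromv.
  by case: (unliftP ord0 i) => [j ->|->]; rewrite ?liftK ?unlift_none.
have [g mK gK] := fpair Y ('I_n -> Y).
have : fmap tov z = fmap tov z'.
  apply: (can_inj mK); congr (_, _).
  - rewrite -!(fcomp (h := ev ord0)) //; exact: H.
  - apply: IH => j; rewrite -!(fcomp (h := fun v => ev j (snd v))) // -!(fcomp (h := ev (lift ord0 j))) //; exact: H.
move=> E1; rewrite -[z]fid -[z']fid.
rewrite !(fcomp (f := tov) (g := fromv)) ?E1 // => v; by rewrite fK.
Qed.

Lemma ev_ex Y n (t : 'I_n -> F Y) : exists z, forall i, fmap (ev i) z = t i.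
Proof.
elim: n t => [|n IH] t.
  have [u _] := funit; exists (fmap (fun _ => (fun i : 'I_0 => match i with Ordinal _ p => False_rect Y (notF p) end)) u); by case.
pose fromv (p : Y * ('I_n -> Y)) : 'I_n.+1 -> Y :=
  fun i => match unlift ord0 i with Some j => p.2 j | None => p.1 end.
have [w Hw] := IH (fun j => t (lift ord0 j)).
have [g mK gK] := fpair Y ('I_n -> Y).
have := gK (t ord0, w); case => E1 E2.
exists (fmap fromv (g (t ord0, w))) => i.
case: (unliftP ord0 i) => [j ->|->].
- rewrite -Hw -[in RHS]E2 -(fcomp (h := fun p => fromv p (lift ord0 j))) //.
  rewrite -(fcomp (h := fun p => ev j p.2)) //.
  apply: fext => p; by rewrite /fromv /ev liftK.
- rewrite -[in RHS]E1 -(fcomp (h := fun p => fromv p ord0)) //.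
  apply: fext => p; by rewrite /fromv /ev unlift_none.
Qed.
End Prod.

Section Part2.
Variables B E : Type.
Variable L : ((E -> B) -> Prop) -> Prop.
Hypothesis HL : cyl_ultrafilter L.
Variable F : Type -> Type.
Variable fmap : forall X Y : Type, (X -> Y) -> F X -> F Y.
Hypothesis HN : is_NSA fmap.
Hypothesis HC : confined fmap B.
Variable theta : E -> F B.
Hypothesis Hiso : lr_iso L fmap theta.

Lemma fd_of n (e : 'I_n -> E) X (f : ('I_n -> B) -> X) : fin_dep (fun psi : E -> B => f (fun i => psi (e i))).
Proof. by exists n, e, f. Qed.
Lemma fd1 X (f : B -> X) (e : E) : fin_dep (fun psi : E -> B => f (psi e)).
Proof. by exists 1, (fun _ => e), (fun v => f (v ord0)). Qed.

Lemma key0 n (e : 'I_n -> E) (w : F ('I_n -> B)) :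
  (forall i, fmap (ev i) w = theta (e i)) -> forall X (g1 g2 : ('I_n -> B) -> X),
  fmap g1 w = fmap g2 w <-> L (fun psi => g1 (fun i => psi (e i)) = g2 (fun i => psi (e i))).
Proof.
move=> Hw X g1 g2; have [_ Hi] := Hiso; split.
- move=> /(feq_ex HN) [r Hr].
  apply: (proj2 (Hi n e (fun v => g1 v = g2 v))); exists r => i.
  by rewrite -Hw -Hr -(fcomp HN (h := fun w0 => proj1_sig w0 i)).
- move=> /(Hi n e (fun v => g1 v = g2 v)) [r Hr].
  have Er : fmap (@proj1_sig _ _) r = w.
    apply: (ev_uniq HN) => i; rewrite Hw -Hr -(fcomp HN (h := fun w0 => proj1_sig w0 i)) //.
  rewrite -Er -(fcomp HN (h := fun a => g1 (proj1_sig a))) // -(fcomp HN (h := fun a => g2 (proj1_sig a))) //.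
  by apply: (fext fmap) => a; case: a.
Qed.

Lemma key n1 n2 (e1 : 'I_n1 -> E) (e2 : 'I_n2 -> E) z1 z2 :
  (forall i, fmap (ev i) z1 = theta (e1 i)) -> (forall i, fmap (ev i) z2 = theta (e2 i)) ->
  forall X (f1 : ('I_n1 -> B) -> X) (f2 : ('I_n2 -> B) -> X),
  fmap f1 z1 = fmap f2 z2 <-> L (fun psi => f1 (fun i => psi (e1 i)) = f2 (fun i => psi (e2 i))).
Proof.
move=> H1 H2 X f1 f2.
have [w Hw] := ev_ex HN (fun i => theta (concat e1 e2 i)).
have E1 : z1 = fmap (fun v i => v (lshift n2 i)) w.
  apply: (ev_uniq HN) => i; rewrite H1 -(fcomp HN (h := ev (lshift n2 i))) // Hw.
  by rewrite concat_l.
have E2 : z2 = fmap (fun v i => v (rshift n1 i)) w.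
  apply: (ev_uniq HN) => i; rewrite H2 -(fcomp HN (h := ev (rshift n1 i))) // Hw.
  by rewrite concat_r.
rewrite E1 E2 -(fcomp HN (h := fun v => f1 (fun i => v (lshift n2 i)))) // -(fcomp HN (h := fun v => f2 (fun i => v (rshift n1 i)))) //.
rewrite (key0 Hw).
have -> : (fun psi : E -> B => f1 (fun i => psi (concat e1 e2 (lshift n2 i))) =
                               f2 (fun i => psi (concat e1 e2 (rshift n1 i)))) =
          (fun psi => f1 (fun i => psi (e1 i)) = f2 (fun i => psi (e2 i))).
  apply: functional_extensionality => psi; congr (f1 _ = f2 _);
    apply: functional_extensionality => i; by rewrite ?concat_l ?concat_r.
by [].
Qed.

Lemma const1 (b : F B) i : fmap (ev i) (fmap (fun b0 (_ : 'I_1) => b0) b) = b.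
Proof. by rewrite -(fcomp HN (h := fun a => a)) // fid. Qed.

Lemma exists_fe X (x : F X) : exists (f : B -> X) (e : E), x = fmap f (theta e).
Proof.
have [[thinv tK Kt] _] := Hiso.
have [A' [j [jinj [y Hy]]]] := HC x.
case: (classic (exists a : {a | A' a}, True)) => [[a0 _]|Hn]; last first.
  by case: (F_empty HN (fun a => Hn (ex_intro _ a I)) y).
pose jinv b := epsilon (inhabits a0) (fun w => j w = b).
have jK : forall w, jinv (j w) = w.
  move=> w; apply: jinj; exact: (epsilon_spec (inhabits a0) (fun w' => j w' = j w) (ex_intro _ w erefl)).
exists (fun b => proj1_sig (jinv b)), (thinv (fmap j y)); rewrite Kt.
rewrite -(fcomp HN (h := fun w => proj1_sig w)) ?Hy // => w; by rewrite jK.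
Qed.

Lemma alpha_ex X (C : Star L X) : exists y : F X, exists n (e : 'I_n -> E) f z,
  (forall psi, proj1_sig (rep C) psi = f (fun i => psi (e i))) /\ (forall i, fmap (ev i) z = theta (e i)) /\ y = fmap f z.
Proof.
have [n [e [f Hf]]] := proj2_sig (rep C).
have [z Hz] := ev_ex HN (fun i => theta (e i)).
by exists (fmap f z), n, e, f, z.
Qed.
Definition alpha X (C : Star L X) : F X := proj1_sig (constructive_indefinite_description _ (alpha_ex C)).
Lemma alpha_spec X (C : Star L X) : exists n (e : 'I_n -> E) f z,
  (forall psi, proj1_sig (rep C) psi = f (fun i => psi (e i))) /\ (forall i, fmap (ev i) z = theta (e i)) /\ alpha C = fmap f z.
Proof. exact: (proj2_sig (constructive_indefinite_description _ (alpha_ex C))). Qed.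

Lemma gamma_ex X (x : F X) : exists C : Star L X, exists f e, x = fmap f (theta e) /\ C = star_class L (exist _ (fun psi => f (psi e)) (fd1 f e)).
Proof. have [f [e He]] := exists_fe x; by exists (star_class L (exist _ _ (fd1 f e))), f, e. Qed.
Definition gamma X (x : F X) : Star L X := proj1_sig (constructive_indefinite_description _ (gamma_ex x)).
Lemma gamma_spec X (x : F X) : exists f e, x = fmap f (theta e) /\ gamma x = star_class L (exist _ (fun psi => f (psi e)) (fd1 f e)).
Proof. exact: (proj2_sig (constructive_indefinite_description _ (gamma_ex x))). Qed.

Lemma alpha_formula (X : Type) (C : Star L X) (phi : (E -> B) -> X) (n : nat)
              (e : 'I_n -> E) (f : ('I_n -> B) -> X) :
         represents C phi ->
         (forall psi, phi psi = f (fun i => psi (e i))) ->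
         forall z : F ('I_n -> B),
           (forall i, fmap (fun v : 'I_n -> B => v i) z = theta (e i)) ->
           alpha C = fmap f z.
Proof.
move=> [H HC'] Hphi z Hz.
have [n0 [e0 [f0 [z0 [Hr [Hz0 ->]]]]]] := alpha_spec C.
apply/(key Hz0 Hz).
have := HC'; rewrite (rep_spec C) => /(class_eq_inv HL) /= Lr.
refine (L_up HL Lr _ _); first by move=> psi; rewrite Hr Hphi.
exact: cyl2 (fd_of e0 f0) (fd_of e f).
Qed.

Lemma gamma_formula (X : Type) (x : F X) (f : B -> X) (e : E) :
         x = fmap f (theta e) ->
         represents (gamma x) (fun psi => f (psi e)).
Proof.
move=> Hx; have [f0 [e0 [Hx0 ->]]] := gamma_spec x.
exists (fd1 f e); rewrite /=; apply: (class_eq HL) => /=.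
have := proj1 (key (e1 := fun _ : 'I_1 => e0) (e2 := fun _ : 'I_1 => e) (const1 (theta e0)) (const1 (theta e))
   (fun v => f0 (v ord0)) (fun v => f (v ord0))).
apply; rewrite -(fcomp HN (h := f0)) // -(fcomp HN (h := f)) //; by rewrite -Hx0 -Hx.
Qed.

Lemma represents_eq X (C : Star L X) phi : represents C phi -> exists H, C = star_class L (exist _ phi H).
Proof. by move=> [H HC']; exists H; apply: sig_eq. Qed.

Lemma alpha_nat (X Y : Type) (g : X -> Y) (C : Star L X) :
         alpha (starmap g C) = fmap g (alpha C).
Proof.
have [n [e [f [z [Hr [Hz ->]]]]]] := alpha_spec C.
rewrite (@alpha_formula _ (starmap g C) (fun psi => g (proj1_sig (rep C) psi)) n e (fun v => g (f v)) _ _ z Hz).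
- exact: (fcomp HN).
- by exists (proj2_sig (fd_comp g (rep C))).
- by move=> psi; rewrite Hr.
Qed.

Lemma gamma_nat (X Y : Type) (g : X -> Y) (x : F X) :
         gamma (fmap g x) = starmap g (gamma x).
Proof.
have [f [e [Hx ->]]] := gamma_spec x.
have Hgx : fmap g x = fmap (fun b => g (f b)) (theta e) by rewrite Hx -(fcomp HN (h := fun b => g (f b))).
have [H ->] := represents_eq (gamma_formula Hgx).
by rewrite (starmap_class HL); apply: (star_eq_pt HL).
Qed.

Lemma alpha_gamma (X : Type) (x : F X) : alpha (gamma x) = x.
Proof.
have [f [e [Hx Hg]]] := gamma_spec x.
rewrite (@alpha_formula _ (gamma x) (fun psi => f (psi e)) 1 (fun _ => e) (fun v => f (v ord0)) _ _ _ (const1 (theta e))).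
- by rewrite Hx -(fcomp HN (h := fun b => f b)).
- exact: gamma_formula.
- by [].
Qed.

Lemma gamma_alpha (X : Type) (C : Star L X) : gamma (alpha C) = C.
Proof.
have [n [e [f [z [Hr [Hz Ha]]]]]] := alpha_spec C.
have [f0 [e0 [Hx ->]]] := gamma_spec (alpha C).
rewrite -[RHS](star_rep C); apply: (star_eq HL) => /=.
have := proj1 (key (e1 := fun _ : 'I_1 => e0) (const1 (theta e0)) Hz
   (fun v => f0 (v ord0)) f).
move=> K; have {K} Lk : L (fun psi => f0 (psi e0) = f (fun i => psi (e i))).
  apply: K; rewrite -Ha Hx; by rewrite -(fcomp HN (h := f0)).
refine (L_up HL Lk _ _); first by move=> psi; rewrite Hr.
exact: cyl2 (fd1 f0 e0) (proj2_sig (rep C)).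
Qed.
End Part2.

Theorem mainTheorem3 (B E : Type) (L : ((E -> B) -> Prop) -> Prop)
  (HB : ~ finite B) (HL : cyl_ultrafilter L) :
  (* (i) *)
  (is_NSA (@starmap B E L) /\ confined (@starmap B E L) B) /\
  (* (ii) *)
  (forall (F : Type -> Type) (fmap : forall X Y : Type, (X -> Y) -> F X -> F Y),
    is_NSA fmap -> confined fmap B ->
    forall theta : E -> F B, lr_iso L fmap theta ->
    exists (alpha : forall X : Type, Star L X -> F X)
           (gamma : forall X : Type, F X -> Star L X),
      (* alpha is given by the formula of the paper, for every representation *)
      (forall (X : Type) (C : Star L X) (phi : (E -> B) -> X) (n : nat)
              (e : 'I_n -> E) (f : ('I_n -> B) -> X),
         represents C phi ->
         (forall psi, phi psi = f (fun i => psi (e i))) ->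
         forall z : F ('I_n -> B),
           (forall i, fmap _ _ (fun v : 'I_n -> B => v i) z = theta (e i)) ->
           alpha X C = fmap _ _ f z) /\
      (* gamma is given by the formula of the paper, for every choice of f, e *)
      (forall (X : Type) (x : F X) (f : B -> X) (e : E),
         x = fmap _ _ f (theta e) ->
         represents (gamma X x) (fun psi => f (psi e))) /\
      (* naturality *)
      (forall (X Y : Type) (g : X -> Y) (C : Star L X),
         alpha Y (starmap g C) = fmap _ _ g (alpha X C)) /\
      (forall (X Y : Type) (g : X -> Y) (x : F X),
         gamma Y (fmap _ _ g x) = starmap g (gamma X x)) /\
      (* mutually inverse *)
      (forall (X : Type) (x : F X), alpha X (gamma X x) = x) /\
      (forall (X : Type) (C : Star L X), gamma X (alpha X C) = C)).
Proof.
split; first split; [exact: part1_NSA HL | exact: part1_conf HL HB|].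
move=> F fmap HN HC theta Hiso.
exists (fun X => @alpha B E L F fmap HN theta X), (fun X => @gamma B E L F fmap HN HC theta Hiso X).
split; [|split; [|split; [|split; [|split]]]].
- move=> X C phi n e f Hr Hphi z Hz; exact (alpha_formula HL HN Hiso Hr Hphi Hz).
- move=> X x f e Hx; exact (gamma_formula HL HN HC Hiso Hx).
- move=> X Y g C; exact (alpha_nat HL HN Hiso g C).
- move=> X Y g x; exact (gamma_nat HL HN HC Hiso g x).
- move=> X x; exact (alpha_gamma HL HN HC Hiso x).
- move=> X C; exact (gamma_alpha HL HN HC Hiso C).
Qed.
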